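(* Let $A \in \{0,1\}^{n \times n}$ be a uniformly random binary matrix (entries i.i.d. taking values $0$ and $1$ with probability $1/2$ each). Then \[ \mathbb{P}[A \text{ is factorizable}] \leq \sum_{(n_1,n_2) \in \mathcal{C}} \frac{2^{n_1^2+n_2^2}}{2^{n^2}}, \] where $\mathcal{C}$ is the set of compatible pairs for $n$.
   Context: A compatible pair for $n$ is a pair of integers $(n_1,n_2)$ with $n_1,n_2$ positive divisors of $n$, $n_1,n_2\notin\{1,n\}$, and $n_1n_2=n$. A binary matrix $A\in\{0,1\}^{n\times n}$ is factorizable (decomposable) if there exist $\ell>1$ and matrices $A_i\in\{0,1\}^{n_i\times n_i}$ with $n_i>1$ such that $A=A_1\otimes\cdots\otimes A_\ell$, where the Kronecker product uses Boolean arithmetic ($1+1=1$). *)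

(* Defs.v *)
From mathcomp Require Import all_boot all_order all_algebra.
From mathcomp Require Import boolp.
Set Implicit Arguments. Unset Strict Implicit. Unset Printing Implicit Defensive.
Import GRing.Theory Num.Theory.

(* Total accessor to the entries of a square boolean matrix, indexed by nat
   (false outside the range; only used inside the range below). *)
Definition bent (m : nat) (A : 'M[bool]_m) (i j : nat) : bool :=
  match insub i, insub j with
  | Some i', Some j' => A i' j'
  | _, _ => false
  end.

(* Boolean Kronecker product: entry ((i1,i2),(j1,j2)) at row i1*m2+i2,
   column j1*m2+j2 is A1 i1 j1 && A2 i2 j2  (Boolean arithmetic). *)
Definition bkron (m1 m2 : nat) (A1 : 'M[bool]_m1) (A2 : 'M[bool]_m2)
  : 'M[bool]_(m1 * m2) :=
  \matrix_(i < m1 * m2, j < m1 * m2)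
     (bent A1 (i %/ m2) (j %/ m2) && bent A2 (i %% m2) (j %% m2)).

Definition smx := {m : nat & 'M[bool]_m}.

Definition skron (X Y : smx) : smx := Tagged (fun m => 'M[bool]_m) (bkron (tagged X) (tagged Y)).

(* A is factorizable iff A = A_1 (x) A_2 (x) ... (x) A_l with l > 1 and
   every A_i of size n_i > 1.  The list B :: Bs is [A_1; ...; A_l]. *)
Definition factorizable (n : nat) (A : 'M[bool]_n) : Prop :=
  exists (B : smx) (Bs : seq smx),
    [/\ Bs != [::], all (fun X : smx => 1 < tag X) (B :: Bs)
      & foldl skron B Bs = Tagged (fun m => 'M[bool]_m) A].

Definition compatible (n n1 n2 : nat) : bool :=
  [&& 0 < n1, 0 < n2, n1 %| n, n2 %| n,
      n1 \notin [:: 1; n], n2 \notin [:: 1; n] & n1 * n2 == n].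

(* Main.v *)
Require Import Defs.
From mathcomp Require Import all_boot all_order all_algebra.
From mathcomp Require Import boolp.
Import GRing.Theory Num.Theory.
Local Open Scope ring_scope.

Lemma bentE m (M : 'M[bool]_m) (i j : 'I_m) : bent M i j = M i j.
Proof. by rewrite /bent !valK. Qed.

Lemma smx_bent (X Y : smx) : X = Y -> forall i j, bent (tagged X) i j = bent (tagged Y) i j.
Proof. by move=> ->. Qed.

Lemma fold_gt1 (s : seq smx) (B : smx) : (1 < tag B)%N ->
  all (fun X : smx => 1 < tag X)%N s -> (1 < tag (foldl skron B s))%N.
Proof.
elim: s B => [|x s IH] B //= hB /andP[hx hs]; apply: IH hs => /=.
by apply: (leq_trans hB); rewrite leq_pmulr // ltnW.
Qed.

Lemma bent_lt m (M : 'M[bool]_m) i j (hi : (i < m)%N) (hj : (j < m)%N) :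
  bent M i j = M (Ordinal hi) (Ordinal hj).
Proof. by rewrite /bent !insubT. Qed.

Lemma compat_mul m1 m2 : (1 < m1)%N -> (1 < m2)%N ->
  ([&& 0 < m1, 0 < m2, m1 %| m1 * m2, m2 %| m1 * m2,
      m1 \notin [:: 1; m1 * m2], m2 \notin [:: 1; m1 * m2] & m1 * m2 == m1 * m2])%N.
Proof.
move=> hX hY.
rewrite !inE dvdn_mulr ?dvdn_mull // eqxx !andbT (ltnW hX) (ltnW hY) /=.
rewrite !negb_or !neq_ltn hX hY /=.
by rewrite ltn_Pmulr ?ltn_Pmull ?orbT // ltnW.
Qed.

Definition gp (n : nat) (p : 'I_n.+1 * 'I_n.+1) (xy : 'M[bool]_p.1 * 'M[bool]_p.2)
  : 'M[bool]_n :=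
  \matrix_(i < n, j < n)
     (bent xy.1 (i %/ p.2) (j %/ p.2) && bent xy.2 (i %% p.2) (j %% p.2)).

Definition Sp n (p : 'I_n.+1 * 'I_n.+1) : {set 'M[bool]_n} := [set @gp n p xy | xy in setT].

Lemma fact_in n (A : 'M[bool]_n) : factorizable A ->
  exists2 p : 'I_n.+1 * 'I_n.+1, compatible n p.1 p.2 & A \in Sp n p.
Proof.
case=> B [Bs [nz hall E]].
case/lastP: Bs nz hall E => [//|Bs' Y] _ hall.
rewrite foldl_rcons => E.
set X := foldl skron B Bs' in E.
have hn : (tag X * tag Y = n)%N by move/(congr1 tag): E.
have hY : (1 < tag Y)%N.
  by move/allP: hall; apply; rewrite inE mem_rcons inE eqxx orbT.
have hX : (1 < tag X)%N.
  rewrite /= all_rcons in hall; case/andP: hall => h1 /andP[_ h2].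
  exact: fold_gt1.
have hE := @smx_bent _ _ E; rewrite /= in hE.
clearbody X; clear hall; case: X hE hn hX E => m1 M1; case: Y hY => m2 M2 /= hY hE hn hX _.
have h1 : (m1 < n.+1)%N.
  by rewrite ltnS -hn leq_pmulr // ltnW.
have h2 : (m2 < n.+1)%N.
  by rewrite ltnS -hn leq_pmull // ltnW.
exists (Ordinal h1, Ordinal h2).
  by rewrite /compatible /=; move: (@compat_mul _ _ hX hY); rewrite hn.
apply/imsetP; exists (M1, M2); first by rewrite inE.
apply/matrixP => i j; rewrite mxE /=.
have hi : (i < m1 * m2)%N by rewrite hn.
have hj : (j < m1 * m2)%N by rewrite hn.
by rewrite -bentE -hE (@bent_lt _ _ _ _ hi hj) mxE.
Qed.


Theorem lemma2 (n : nat) :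
  (#|[set A : 'M[bool]_n | `[< factorizable A >]]|%:R
     / #|{: 'M[bool]_n}|%:R : rat)
  <= \sum_(p : 'I_n.+1 * 'I_n.+1 | compatible n p.1 p.2)
        ((2 ^ (p.1 ^ 2 + p.2 ^ 2))%N%:R / (2 ^ (n ^ 2))%N%:R).
Proof.
set F := [set A : 'M[bool]_n | `[< factorizable A >]].
have hsub : F \subset \bigcup_(p : 'I_n.+1 * 'I_n.+1 | compatible n p.1 p.2) Sp n p.
  apply/subsetP => A; rewrite inE => /asboolP /fact_in [p hp hA].
  by apply/bigcupP; exists p.
have hcard : (#|F| <= \sum_(p : 'I_n.+1 * 'I_n.+1 | compatible n p.1 p.2)
                 2 ^ (p.1 ^ 2 + p.2 ^ 2))%N.
  apply: (leq_trans (subset_leq_card hsub)).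
  apply: (big_ind2 (fun (U : {set 'M[bool]_n}) s => #|U| <= s)%N).
  - by rewrite cards0.
  - move=> U1 s1 U2 s2 h1 h2.
    exact: leq_trans (leq_card_setU U1 U2).1 (leq_add h1 h2).
  - move=> p _; apply: leq_trans (leq_imset_card _ _) _.
    by rewrite cardsT card_prod !card_mx card_bool expnD -!mulnn.
rewrite card_mx card_bool mulnn -mulr_suml -natr_sum.
by apply: ler_wpM2r; [rewrite invr_ge0 ler0n | rewrite ler_nat].
Qed.
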